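(* Let $M$ be a topological space. (a) Every continuous function $f:M\to\mathbb{R}$ induces a strongly regular spectral family $E^f:\mathbb{R}\to\mathcal{T}(M)$ by $E^f_\lambda:=\mathrm{int}(f^{-1}(]-\infty,\lambda]))$; its admissible domain $\mathcal{D}(E^f)$ equals $M$, and the function $f_{E^f}:M\to\mathbb{R}$ induced by $E^f$ is $f$. (b) Conversely, if $E:\mathbb{R}\to\mathcal{T}(M)$ is a strongly regular spectral family, then the induced function $f_E:\mathcal{D}(E)\to\mathbb{R}$ is continuous, and the spectral family $E^{f_E}$ in $\mathcal{T}(\mathcal{D}(E))$ induced by $f_E$ (i.e. $E^{f_E}_\lambda=\mathrm{int}_{\mathcal{D}(E)}f_E^{-1}(]-\infty,\lambda])$) satisfies $E^{f_E}_\lambda=E_\lambda\cap\mathcal{D}(E)$ for all $\lambda\in\mathbb{R}$.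
   Context: $\mathcal{T}(M)$ is the lattice of open subsets of $M$, with $\bigvee_\alpha U_\alpha=\bigcup_\alpha U_\alpha$ and $\bigwedge_\alpha U_\alpha=\mathrm{int}\bigcap_\alpha U_\alpha$. A spectral family in $\mathcal{T}(M)$ is a map $E:\mathbb{R}\to\mathcal{T}(M)$ with $E_\lambda\subseteq E_\mu$ for $\lambda\le\mu$, $E_\lambda=\bigwedge_{\mu>\lambda}E_\mu$, $\bigwedge_\lambda E_\lambda=\emptyset$, $\bigcup_\lambda E_\lambda=M$. It is strongly regular if $\overline{E_\lambda}\subseteq E_\mu$ whenever $\lambda<\mu$. Its admissible domain is $\mathcal{D}(E)=\{x\in M\mid\exists\lambda:x\notin E_\lambda\}$ and its induced function is $f_E(x)=\inf\{\lambda\mid x\in E_\lambda\}$, $x\in\mathcal{D}(E)$. *)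

(* Defs.v *)
From HB Require Import structures.
From mathcomp Require Import all_boot all_order all_algebra.
From mathcomp Require Import all_classical all_reals all_analysis.
Set Implicit Arguments. Unset Strict Implicit. Unset Printing Implicit Defensive.
Import Order.TTheory GRing.Theory Num.Theory numFieldNormedType.Exports.
Local Open Scope classical_set_scope.
Local Open Scope ring_scope.

(* A spectral family in the lattice T(M) of open subsets of M.
   Meets in T(M) are interiors of intersections, joins are unions. *)
Definition is_spectral_family (R : realType) (M : topologicalType)
    (E : R -> set M) : Prop :=
  [/\ (forall l, open (E l)),
      (forall l m, l <= m -> E l `<=` E m),
      (forall l, E l = interior (\bigcap_(m in [set m | l < m]) E m)),
      interior (\bigcap_l E l) = set0
    & \bigcup_l E l = setT].

Definition strongly_regular (R : realType) (M : topologicalType)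
    (E : R -> set M) : Prop :=
  forall l m, l < m -> closure (E l) `<=` E m.

Definition adm_domain (R : realType) (M : topologicalType)
    (E : R -> set M) : set M :=
  [set x | exists l, ~ E l x].

(* induced function f_E x = inf {l | x in E_l}; only meaningful on D(E). *)
Definition induced_fun (R : realType) (M : topologicalType)
    (E : R -> set M) (x : M) : R :=
  inf [set l | E l x].

Definition spec_of_fun (R : realType) (M : topologicalType)
    (f : M -> R) (l : R) : set M :=
  interior (f @^-1` [set y | y <= l]).

(* Main.v *)
Require Import Defs.
From HB Require Import structures.
From mathcomp Require Import all_boot all_order all_algebra.
From mathcomp Require Import all_classical all_reals all_analysis.
From mathcomp Require Import lra.
Import Order.TTheory GRing.Theory Num.Theory numFieldNormedType.Exports.
Local Open Scope classical_set_scope.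
Local Open Scope ring_scope.

Lemma le_of_gt (R : realType) (a b : R) : (forall l, a < l -> b <= l) -> b <= a.
Proof.
move=> H; apply/ler_addgt0Pr => e e0; apply: H; lra.
Qed.

Section Induced.
Variables (R : realType) (M : topologicalType) (E : R -> set M).
Hypothesis mono : forall l m, l <= m -> E l `<=` E m.
Hypothesis cover : forall x, exists l, E l x.

Lemma if_le x : adm_domain E x -> forall l, E l x -> induced_fun E x <= l.
Proof.
move=> [l0 hl0] l Elx; apply: (ge_inf); last exact: Elx.
exists l0 => y Ey; rewrite leNgt; apply/negP => ylt; apply: hl0.
exact: mono (ltW ylt) _ Ey.
Qed.

Lemma if_lt x l : induced_fun E x < l -> E l x.
Proof.
move=> H; have [y Ey ylt] := inf_lt (cover x) H.
exact: mono (ltW ylt) _ Ey.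
Qed.
End Induced.

Theorem theorem2p35 (R : realType) (M : topologicalType) :
  (forall f : M -> R, continuous f ->
     [/\ is_spectral_family (spec_of_fun f),
         strongly_regular (spec_of_fun f),
         adm_domain (spec_of_fun f) = setT
       & forall x, induced_fun (spec_of_fun f) x = f x]) /\
  (forall E : R -> set M, is_spectral_family E -> strongly_regular E ->
     {within adm_domain E, continuous (induced_fun E)} /\
     (forall l : R,
        @spec_of_fun R (subspace (adm_domain E)) (induced_fun E) l
          `&` adm_domain E
        = E l `&` adm_domain E)).
Proof.
split.
  move=> f fc.
  set F := spec_of_fun f.
  have Fle : forall l x, F l x -> f x <= l.
    by move=> l x /interior_subset.
  have Flt : forall l x, f x < l -> F l x.
    move=> l x fxl.
    have : nbhs (f x) [set y | y < l].
      by apply: open_nbhs_nbhs; split; [exact: open_lt|].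
    by move=> /fc; apply: filterS => y /= /ltW.
  have mono : forall l m, l <= m -> F l `<=` F m.
    move=> l m lm; apply: interiorS => y /= yl; exact: le_trans yl lm.
  have cover : forall x, exists l, F l x.
    by move=> x; exists (f x + 1); apply: Flt; lra.
  have dom : adm_domain F = setT.
    apply/seteqP; split => // x _; exists (f x - 1) => /Fle; lra.
  split => //.
  - split.
    + move=> l; exact: open_interior.
    + exact: mono.
    + move=> l; apply/seteqP; split.
        move=> x Fx; have : nbhs x (F l).
          by apply: open_nbhs_nbhs; split => //; exact: open_interior.
        apply: filterS => y Fy m /= lm; exact: mono (ltW lm) _ Fy.
      apply: interiorS => y /= Hy; apply: le_of_gt => m lm.
      exact: Fle (Hy m lm).
    + apply/seteqP; split => // x /interior_subset Hx.
      have := Fle _ _ (Hx (f x - 1) I); lra.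
    + apply/seteqP; split => // x _; have [l Fl] := cover x; by exists l.
  - move=> l m lm.
    have cl : closed (f @^-1` [set y | y <= l]).
      apply: preimage_closed; last exact: closed_le.
      by move=> x _; exact: fc.
    have := closureS (@interior_subset _ (f @^-1` [set y | y <= l])).
    rewrite -(proj1 (closure_id _) cl) => H x /H /= xl.
    apply: Flt; lra.
  - move=> x.
    have Dx : adm_domain F x by rewrite dom.
    apply/eqP; rewrite eq_le; apply/andP; split.
      apply: le_of_gt => l lx; exact: (@if_le _ _ _ mono x Dx _ (Flt _ _ lx)).
    apply: le_of_gt => l lx; exact: Fle (@if_lt _ _ _ mono cover x _ lx).
move=> E [Eo Emono Eint Ebot Ecov] Ereg.
have cover : forall x, exists l, E l x.
  move=> x; have : (\bigcup_l E l) x by rewrite Ecov.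
  by move=> [l _ Elx]; exists l.
set D := adm_domain E.
set f := induced_fun E.
split.
  apply/subspace_continuousP => x Dx.
  apply/cvgrPdist_le => e e0.
  rewrite nearE /=.
  have Unb : nbhs x (E (f x + e) `&` ~` closure (E (f x - e))).
    apply: open_nbhs_nbhs; split.
      apply: openI; [exact: Eo| exact/closed_openC/closed_closure].
    split; first by apply: (@if_lt _ _ _ Emono cover); lra.
    move=> cl; have := Ereg (f x - e) (f x - e / 2) ltac:(lra) _ cl.
    move=> /(@if_le _ _ _ Emono x Dx); rewrite -/f; lra.
  rewrite /within; apply: filterS Unb => t [Et nCt] Dt.
  have h1 := @if_le _ _ _ Emono t Dt _ Et.
  have h2 : f x - e <= f t.
    rewrite leNgt; apply/negP => H; apply: nCt; apply: subset_closure.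
    exact: (@if_lt _ _ _ Emono cover).
  rewrite /from_subspace ler_norml; rewrite -/f in h1; apply/andP; split; lra.
move=> l; apply/seteqP; split => x [Hx Dx]; split => //.
  move: Hx; rewrite /spec_of_fun /interior /= => Hx.
  have {Hx} Hx : within D (nbhs (x : M)) (f @^-1` [set y | y <= l]).
    move: Hx; change (nbhs_subspace (x : subspace D) (f @^-1` [set y | y <= l]) -> within D (nbhs (x : M)) (f @^-1` [set y | y <= l])).
    by rewrite -(@nbhs_subspace_in _ D x Dx).
  suff : (\bigcap_(m in [set m | l < m]) E m)° (x : M) by rewrite -Eint.
  rewrite /interior /=.
  have {}Hx : nbhs (x : M) (fun t => D t -> f t <= l) := Hx.
  apply: (filterS _ Hx) => y Hy m /= lm.
  have [Dy|nDy] := pselect (D y).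
    by apply: (@if_lt _ _ _ Emono cover); have := Hy Dy; rewrite /= -/f; lra.
  by apply: contrapT => nE; apply: nDy; exists m.
rewrite /spec_of_fun /interior /=.
suff : within D (nbhs (x : M)) (f @^-1` [set y | y <= l]).
  change (within D (nbhs (x : M)) (f @^-1` [set y | y <= l]) -> nbhs_subspace (x : subspace D) (f @^-1` [set y | y <= l])).
  by rewrite -(@nbhs_subspace_in _ D x Dx).
have H : nbhs (x : M) (E l) by apply: open_nbhs_nbhs; split => //; exact: Eo.
suff : nbhs (x : M) (fun t => D t -> f t <= l) by [].
apply: (filterS _ H) => y Ey Dy /=.
exact: (@if_le _ _ _ Emono y Dy _ Ey).
Qed.
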